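(* Let $K$ be the $2$-uniform tiling of the plane whose vertex types are $[3^6]$ and $[3^2,4^1,3^1,4^1]$. If $X$ is a map on the torus that is a quotient $X=K/\Gamma$ of $K$, then the vertices of $X$ form at most $4$ orbits under ${\rm Aut}(X)$.
   Context: A map is a polyhedral map: a cellular embedding of a connected graph in a closed surface such that the intersection of any two distinct faces is empty, a single vertex, or a single edge. For a vertex $u$, the faces containing $u$ form a cyclic sequence (the face-cycle at $u$); if this cyclic sequence consists of consecutive blocks of $n_1$ $p_1$-gons, then $n_2$ $p_2$-gons, ..., then $n_k$ $p_k$-gons, with cyclically consecutive $p_i$ distinct, then $u$ is said to have type $[p_1^{n_1},\dots,p_k^{n_k}]$ (defined up to cyclic shift and reversal). A $2$-uniform tiling is an edge-to-edge tiling of the Euclidean plane $\mathbb{R}^2$ by regular polygons whose symmetry group has exactly two orbits on the set of vertices; viewed as a map on the plane, its vertices have (at most) two types, listed as $[W;Z]$. (Up to isomorphism there are exactly $20$ such tilings; there is exactly one with the vertex types named in the claim.) For a map $K$ on the plane, a quotient of $K$ on the torus is a map $X$ on the torus together with a polyhedral covering map $\eta:K\to X$ with $X=K/\Gamma$, where $\Gamma\le {\rm Aut}(K)$ is a subgroup acting without fixed vertices, edges or faces and $K/\Gamma$ is homeomorphic to the torus. ${\rm Aut}(X)$ denotes the automorphism group of the map $X$, acting on its vertex set $V(X)$. *)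

(* Defs.v *)
From Stdlib Require Import ZArith List.
Import ListNotations.
Open Scope Z_scope.

Inductive six := S0 | S1 | S2 | S3 | S4 | S5.

Definition nxt (k : six) : six :=
  match k with S0 => S1 | S1 => S2 | S2 => S3 | S3 => S4 | S4 => S5 | S5 => S0 end.
Definition prv (k : six) : six :=
  match k with S0 => S5 | S1 => S0 | S2 => S1 | S3 => S2 | S4 => S3 | S5 => S4 end.

(* Neighbour vectors of the triangular lattice Z^2 (basis at 60 degrees):
   direction j points at angle 60*j degrees. *)
Definition dv (j : six) : Z * Z :=
  match j with
  | S0 => (1, 0) | S1 => (0, 1) | S2 => (-1, 1)
  | S3 => (-1, 0) | S4 => (0, -1) | S5 => (1, -1)
  end.

(* Geometric picture: K is the rhombitrihexagonal tiling 3.4.6.4 with every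
   hexagon subdivided into 6 triangles.  Hexagons are centred at the points
   (m,n) of the triangular lattice.
   Cen m n   = centre of hexagon (m,n)            (type [3^6])
   Bdy m n k = corner of hexagon (m,n) at angle 30+60k degrees
                                                   (type [3^2,4,3,4]) *)
Inductive KV := Cen (m n : Z) | Bdy (m n : Z) (k : six).

Definition bdv (m n : Z) (j k : six) : KV :=
  Bdy (m + fst (dv j)) (n + snd (dv j)) k.

(* Face labels (squares are listed twice, once from each adjacent hexagon,
   which is harmless since faces are only used up to cyclic rotation). *)
Inductive KF :=
| Tri (m n : Z) (k : six)   (* triangle of the subdivided hexagon *)
| Sqr (m n : Z) (j : six)   (* square on edge j of hexagon (m,n) *)
| Up (m n : Z)              (* triangle between hexagons h, h+d0, h+d1 *)
| Dn (m n : Z).             (* triangle between hexagons h, h+d1, h+d2 *)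

(* Boundary cycles, all oriented counterclockwise. *)
Definition bd (f : KF) : list KV :=
  match f with
  | Tri m n k => [Cen m n; Bdy m n k; Bdy m n (nxt k)]
  | Sqr m n j => [Bdy m n j; Bdy m n (prv j);
                  bdv m n j (nxt (nxt (nxt j))); bdv m n j (nxt (nxt j))]
  | Up m n => [Bdy m n S0; Bdy (m + 1) n S2; Bdy m (n + 1) S4]
  | Dn m n => [Bdy m n S1; Bdy m (n + 1) S3; Bdy (m - 1) (n + 1) S5]
  end.

Definition rot {A : Type} (n : nat) (l : list A) : list A :=
  skipn n l ++ firstn n l.

Definition KFace (l : list KV) : Prop := exists f n, l = rot n (bd f).

Definition KEdge (u v : KV) : Prop := exists t, KFace (u :: v :: t).

Definition face_pres (s : KV -> KV) : Prop :=
  forall l, KFace l -> KFace (map s l) \/ KFace (rev (map s l)).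

Definition is_autK (s : KV -> KV) : Prop :=
  exists t, (forall x, t (s x) = x) /\ (forall x, s (t x) = x)
            /\ face_pres s /\ face_pres t.

Definition subgroup_autK (G : (KV -> KV) -> Prop) : Prop :=
  (forall g, G g -> is_autK g)
  /\ (exists e, G e /\ forall x, e x = x)
  /\ (forall g h, G g -> G h -> exists k, G k /\ forall x, k x = g (h x))
  /\ (forall g, G g -> exists h, G h /\ forall x, h (g x) = x /\ g (h x) = x).

Definition acts_freely (G : (KV -> KV) -> Prop) : Prop :=
  forall g, G g ->
    ((exists v, g v = v)
     \/ (exists u v, KEdge u v /\ g u = v /\ g v = u)
     \/ (exists l, KFace l /\ forall x, In x (map g l) <-> In x l)) ->
    forall x, g x = x.

(* K/G is homeomorphic to the torus: it is compact (finitely many vertex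
   orbits) and orientable (G preserves the orientation of K). *)
Definition quotient_is_torus (G : (KV -> KV) -> Prop) : Prop :=
  (exists reps : list KV, forall u, exists r g, In r reps /\ G g /\ g r = u)
  /\ (forall g, G g -> forall l, KFace l -> KFace (map g l)).

(* vertices of X = K/G : G-orbits *)
Definition eqv (G : (KV -> KV) -> Prop) (u v : KV) : Prop :=
  exists g, G g /\ g u = v.

Definition inX (G : (KV -> KV) -> Prop) (l : list KV) (x : KV) : Prop :=
  exists y, In y l /\ eqv G y x.

Definition adj (l : list KV) (u v : KV) : Prop :=
  exists n t, rot n l = u :: v :: t.

Definition edgeX_on (G : (KV -> KV) -> Prop) (l : list KV) (a b : KV) : Prop :=
  exists u v, (adj l u v \/ adj l v u) /\ eqv G u a /\ eqv G v b.

Definition sameXFace (G : (KV -> KV) -> Prop) (l1 l2 : list KV) : Prop :=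
  exists g, G g /\ forall x, In x (map g l1) <-> In x l2.

(* X = K/G is a polyhedral map: faces are cycles (no repeated vertices),
   the graph is simple, and two distinct faces meet in nothing, a vertex
   or an edge. *)
Definition polyhedral_quotient (G : (KV -> KV) -> Prop) : Prop :=
  (forall l, KFace l -> forall i j u v, i <> j ->
       nth_error l i = Some u -> nth_error l j = Some v -> ~ eqv G u v)
  /\ (forall u v u' v', KEdge u v -> KEdge u' v' -> eqv G u u' -> eqv G v v' ->
       exists g, G g /\ ((g u = u' /\ g v = v') \/ (g u = v' /\ g v = u')))
  /\ (forall l1 l2, KFace l1 -> KFace l2 -> ~ sameXFace G l1 l2 ->
       (forall x, ~ (inX G l1 x /\ inX G l2 x))
       \/ (exists a, forall x, inX G l1 x -> inX G l2 x -> eqv G x a)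
       \/ (exists a b, (forall x, inX G l1 x -> inX G l2 x -> eqv G x a \/ eqv G x b)
                       /\ edgeX_on G l1 a b /\ edgeX_on G l2 a b)).

(* X-face preservation for a lift phi : V(K) -> V(K) of a map V(X) -> V(X) *)
Definition face_presX (G : (KV -> KV) -> Prop) (phi : KV -> KV) : Prop :=
  forall l, KFace l -> exists l', KFace l' /\
    (Forall2 (eqv G) (map phi l) l' \/ Forall2 (eqv G) (map phi l) (rev l')).

Definition respects (G : (KV -> KV) -> Prop) (phi : KV -> KV) : Prop :=
  forall u v, eqv G u v -> eqv G (phi u) (phi v).

(* phi (a map on representatives) induces an automorphism of X = K/G *)
Definition is_autX (G : (KV -> KV) -> Prop) (phi : KV -> KV) : Prop :=
  respects G phi /\
  exists psi, respects G psi
    /\ (forall u, eqv G (psi (phi u)) u /\ eqv G (phi (psi u)) u)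
    /\ face_presX G phi /\ face_presX G psi.

(* Main.v *)
Require Import Defs.
From Stdlib Require Import ZArith List Lia.
Import ListNotations.
Open Scope Z_scope.

Lemma rot_ge {A} (n : nat) (l : list A) : (length l <= n)%nat -> rot n l = l.
Proof. intros H; unfold rot; rewrite skipn_all2, firstn_all2; auto. Qed.

Lemma map_rot {A B} (f : A -> B) n l : map f (rot n l) = rot n (map f l).
Proof. unfold rot; rewrite map_app, firstn_map, skipn_map; auto. Qed.

Lemma In_rot {A} n (l : list A) x : In x (rot n l) <-> In x l.
Proof.
  unfold rot. rewrite in_app_iff. rewrite <- (firstn_skipn n l) at 3.
  rewrite in_app_iff. tauto.
Qed.

Lemma rot3 {A} (x y z : A) k n : exists n', rot n (rot k [x;y;z]) = rot n' [x;y;z].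
Proof.
  destruct k as [|[|[|k]]];
  [ | | | rewrite (rot_ge (S (S (S k)))) by (simpl; lia)];
  (destruct n as [|[|[|n]]];
   [ | | | rewrite (rot_ge (S (S (S n)))) by (simpl; lia)]);
  simpl;
  first [ exists 0%nat; reflexivity | exists 1%nat; reflexivity | exists 2%nat; reflexivity ].
Qed.

Lemma rot4 {A} (x y z w : A) k n : exists n', rot n (rot k [x;y;z;w]) = rot n' [x;y;z;w].
Proof.
  destruct k as [|[|[|[|k]]]];
  [ | | | | rewrite (rot_ge (S (S (S (S k))))) by (simpl; lia)];
  (destruct n as [|[|[|[|n]]]];
   [ | | | | rewrite (rot_ge (S (S (S (S n))))) by (simpl; lia)]);
  simpl;
  first [ exists 0%nat; reflexivity | exists 1%nat; reflexivity | exists 2%nat; reflexivity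
        | exists 3%nat; reflexivity ].
Qed.

Lemma KFace_rot l n : KFace l -> KFace (rot n l).
Proof.
  intros [f [k ->]]. exists f.
  destruct f; simpl bd; first [apply rot3 | apply rot4].
Qed.

Lemma KFace_bd f : KFace (bd f).
Proof. exists f, 0%nat. destruct f; reflexivity. Qed.

Definition six_eqb (a b : six) : bool :=
  match a, b with
  | S0,S0 | S1,S1 | S2,S2 | S3,S3 | S4,S4 | S5,S5 => true | _,_ => false end.

Definition nextF (a b : KV) : list KV :=
  match a, b with
  | Cen m n, Bdy _ _ k => [Bdy m n (nxt k)]
  | Bdy m n k, Cen _ _ => [Bdy m n (prv k)]
  | Bdy m n k, Bdy m' n' k' =>
     if (Z.eqb m m' && Z.eqb n n')%bool then
       (if six_eqb k' (nxt k) then [Cen m n]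
        else [bdv m n k (nxt (nxt (nxt k))); bdv m n k (nxt (nxt k))])
     else if six_eqb k' (nxt (nxt k)) then [bdv m n (nxt k) (nxt (nxt (nxt (nxt k))))]
     else [bdv m n (nxt k) (nxt (nxt (nxt k))); Bdy m n (nxt k)]
  | _, _ => []
  end.

Ltac zdes := repeat match goal with |- context [Z.eqb ?x ?y] =>
   destruct (Z.eqb_spec x y); try (exfalso; lia) end.


Lemma KF_cen m n l : KFace (Cen m n :: l) -> exists j, l = [Bdy m n j; Bdy m n (nxt j)].
Proof.
  intros [f [k H]].
  destruct f as [m' n' j|m' n' j|m' n'|m' n'];
  (destruct k as [|[|[|[|k]]]];
    [ | | | | rewrite (rot_ge (S (S (S (S k))))) in H by (simpl; lia)]);
  simpl in H; inversion H; subst; eauto.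
Qed.


Ltac feq := repeat (first [reflexivity | solve [lia] | f_equal]).
Ltac fin := unfold bdv; simpl; feq.

Lemma KF_next a b l : KFace (a :: b :: l) -> l = nextF a b.
Proof.
  intros [f [k H]].
  destruct f as [m n j|m n j|m n|m n];
  destruct k as [|[|[|[|k]]]]; try rewrite rot_ge in H by (simpl; lia);
    simpl in H; inversion H; subst; try destruct j; unfold bdv; simpl; zdes; simpl; fin.
Qed.

Ltac fin2 := unfold rot; simpl; unfold bdv; simpl; feq.

Definition FM (s : KV -> KV) := forall l, KFace l -> KFace (map s l).

Lemma FM_of s : (forall f, exists f' k, map s (bd f) = rot k (bd f')) -> FM s.
Proof.
  intros H l [f [n ->]]. rewrite map_rot. destruct (H f) as [f' [k ->]].
  apply KFace_rot, KFace_rot, KFace_bd.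
Qed.

Lemma FM_ext s t : (forall x, s x = t x) -> FM s -> FM t.
Proof. intros E H l Hl. rewrite <- (map_ext _ _ E). auto. Qed.

Lemma FM_comp s t : FM s -> FM t -> FM (fun x => s (t x)).
Proof. intros Hs Ht l Hl. rewrite <- map_map. auto. Qed.

Definition tr (a b : Z) (x : KV) : KV :=
  match x with Cen m n => Cen (m + a) (n + b) | Bdy m n k => Bdy (m + a) (n + b) k end.

Definition rho (x : KV) : KV :=
  match x with Cen m n => Cen (- n) (m + n) | Bdy m n k => Bdy (- n) (m + n) (nxt k) end.

Definition sig (x : KV) : KV :=
  match x with Cen m n => Cen (- m) (- n) | Bdy m n k => Bdy (- m) (- n) (nxt (nxt (nxt k))) end.

Lemma FM_tr a b : FM (tr a b).
Proof.
  apply FM_of. intros f. destruct f as [m n j|m n j|m n|m n].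
  - exists (Tri (m+a) (n+b) j), 0%nat. fin2.
  - exists (Sqr (m+a) (n+b) j), 0%nat. fin2.
  - exists (Up (m+a) (n+b)), 0%nat. fin2.
  - exists (Dn (m+a) (n+b)), 0%nat. fin2.
Qed.

Lemma FM_rho : FM rho.
Proof.
  apply FM_of. intros f. destruct f as [m n j|m n j|m n|m n].
  - exists (Tri (-n) (m+n) (nxt j)), 0%nat. fin2.
  - exists (Sqr (-n) (m+n) (nxt j)), 0%nat. destruct j; fin2.
  - exists (Dn (-n) (m+n)), 0%nat. fin2.
  - exists (Up (-n-1) (m+n)), 1%nat. fin2.
Qed.

Lemma FM_sig : FM sig.
Proof.
  apply (FM_ext (fun x => rho (rho (rho x)))).
  - intros [m n|m n k]; simpl; feq.
  - apply FM_comp; [apply FM_rho|]. apply FM_comp; apply FM_rho.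
Qed.

Section Rig.
Variables s1 s2 : KV -> KV.
Hypothesis F1 : FM s1.
Hypothesis F2 : FM s2.

Lemma rig_step a b l : KFace (a :: b :: l) -> s1 a = s2 a -> s1 b = s2 b ->
  map s1 l = map s2 l.
Proof.
  intros H Ea Eb.
  pose proof (KF_next (s1 a) (s1 b) (map s1 l) (F1 _ H)) as H1.
  pose proof (KF_next (s2 a) (s2 b) (map s2 l) (F2 _ H)) as H2.
  rewrite H1, H2, Ea, Eb. reflexivity.
Qed.

Lemma rig_hex1 m n k : s1 (Cen m n) = s2 (Cen m n) -> s1 (Bdy m n k) = s2 (Bdy m n k) ->
  s1 (Bdy m n (nxt k)) = s2 (Bdy m n (nxt k)).
Proof.
  intros E1 E2. pose proof (rig_step _ _ _ (KFace_bd (Tri m n k)) E1 E2) as H.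
  simpl in H. injection H; auto.
Qed.

Lemma rig_hex m n k : s1 (Cen m n) = s2 (Cen m n) -> s1 (Bdy m n k) = s2 (Bdy m n k) ->
  forall k', s1 (Bdy m n k') = s2 (Bdy m n k').
Proof.
  intros E1 E2.
  pose proof (rig_hex1 _ _ _ E1 E2) as h1.
  pose proof (rig_hex1 _ _ _ E1 h1) as h2.
  pose proof (rig_hex1 _ _ _ E1 h2) as h3.
  pose proof (rig_hex1 _ _ _ E1 h3) as h4.
  pose proof (rig_hex1 _ _ _ E1 h4) as h5.
  intros k'; destruct k; destruct k'; simpl in *; assumption.
Qed.

Definition P m n := s1 (Cen m n) = s2 (Cen m n) /\ forall k, s1 (Bdy m n k) = s2 (Bdy m n k).

Lemma rig_nb m n j : P m n -> P (m + fst (dv j)) (n + snd (dv j)).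
Proof.
  intros [E1 E2].
  pose proof (rig_step _ _ _ (KFace_bd (Sqr m n j)) (E2 _) (E2 _)) as H.
  simpl in H. unfold bdv in H. injection H as Ha Hb.
  assert (HT : KFace (rot 1 (bd (Tri (m + fst (dv j)) (n + snd (dv j)) (nxt (nxt j)))))).
  { apply KFace_rot, KFace_bd. }
  unfold rot in HT; simpl in HT.
  pose proof (rig_step _ _ _ HT Hb Ha) as H'. simpl in H'. injection H' as Hc.
  split; auto. exact (rig_hex _ _ _ Hc Hb).
Qed.

Lemma rig_all : P 0 0 -> forall m n, P m n.
Proof.
  intros H0.
  assert (Hm : forall m, P m 0).
  { apply Z.peano_ind; auto.
    - intros x Hx. pose proof (rig_nb _ _ S0 Hx) as H. simpl in H.
      try rewrite Z.add_0_r in H. rewrite <- Z.add_1_r. exact H.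
    - intros x Hx. pose proof (rig_nb _ _ S3 Hx) as H. simpl in H.
      try rewrite Z.add_0_r in H. replace (Z.pred x) with (x + -1) by lia. exact H. }
  intros m. apply Z.peano_ind; auto.
  - intros x Hx. pose proof (rig_nb _ _ S1 Hx) as H. simpl in H.
    try rewrite Z.add_0_r in H. rewrite <- Z.add_1_r. exact H.
  - intros x Hx. pose proof (rig_nb _ _ S4 Hx) as H. simpl in H.
    try rewrite Z.add_0_r in H. replace (Z.pred x) with (x + -1) by lia. exact H.
Qed.

Lemma rigidity : s1 (Cen 0 0) = s2 (Cen 0 0) -> s1 (Bdy 0 0 S0) = s2 (Bdy 0 0 S0) ->
  forall x, s1 x = s2 x.
Proof.
  intros E1 E2.
  assert (H0 : P 0 0) by (split; auto; apply (rig_hex _ _ _ E1 E2)).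
  intros [m n|m n k]; apply (rig_all H0 m n).
Qed.
End Rig.

Definition rotj (j : six) (x : KV) : KV :=
  match j with
  | S0 => x | S1 => rho x | S2 => rho (rho x) | S3 => rho (rho (rho x))
  | S4 => rho (rho (rho (rho x))) | S5 => rho (rho (rho (rho (rho x)))) end.

Lemma FM_id : FM (fun x => x).
Proof. intros l H. rewrite map_id. auto. Qed.

Lemma FM_rotj j : FM (rotj j).
Proof.
  destruct j; unfold rotj;
  repeat first [apply FM_id | apply FM_rho | apply (FM_comp rho); [apply FM_rho|]].
Qed.

Lemma par a : exists p, a = 2*p \/ a = 2*p+1.
Proof. exists (a/2). pose proof (Z.div_mod a 2). pose proof (Z.mod_pos_bound a 2). lia. Qed.

Lemma md3 a : exists p, a = 3*p \/ a = 3*p+1 \/ a = 3*p+2.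
Proof. exists (a/3). pose proof (Z.div_mod a 3). pose proof (Z.mod_pos_bound a 3). lia. Qed.

Section GT.
Variable G : (KV -> KV) -> Prop.
Hypothesis HS : subgroup_autK G.
Hypothesis HF : acts_freely G.
Hypothesis HT : quotient_is_torus G.

Lemma FMG g : G g -> FM g.
Proof. intros Hg l Hl. exact (proj2 HT g Hg l Hl). Qed.

Ltac cb := cbn [map rot skipn firstn app tr rho rotj bd bdv dv fst snd nxt prv]; unfold bdv; cbn [fst snd dv].
Ltac fin3 := unfold rot; cb; feq.
Ltac fixv v Eq := left; exists v; rewrite Eq; cb; feq.
Ltac fixf f Eq :=
  right; right; exists (bd f); split; [apply KFace_bd|]; intros x;
  rewrite (map_ext _ _ Eq);
  first [ replace (map _ (bd f)) with (rot 1 (bd f)) by (symmetry; fin3)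
        | replace (map _ (bd f)) with (rot 2 (bd f)) by (symmetry; fin3)
        | replace (map _ (bd f)) with (rot 3 (bd f)) by (symmetry; fin3) ];
  apply In_rot.

Lemma G_tr g : G g -> exists a b, forall x, g x = tr a b x.
Proof.
  intros Hg.
  destruct HS as [_ [_ [_ Hinv]]].
  destruct (Hinv g Hg) as [h [Hh Hhg]].
  destruct (g (Cen 0 0)) as [a b|p q k] eqn:E.
  - pose proof (FMG g Hg _ (KFace_bd (Tri 0 0 S0))) as HT0.
    simpl in HT0. rewrite E in HT0. apply KF_cen in HT0.
    destruct HT0 as [j HT0]. injection HT0 as Hb0 _.
    assert (Eq : forall x, g x = tr a b (rotj j x)).
    { apply rigidity.
      - apply FMG; auto.
      - apply FM_comp; [apply FM_tr | apply FM_rotj].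
      - rewrite E. destruct j; simpl; feq.
      - rewrite Hb0. destruct j; simpl; feq. }
    destruct j; [exists a, b; exact Eq| | | | | ];
    (assert (Hid : forall x, g x = x);
     [ apply (HF g Hg) | rewrite Hid in Hb0; injection Hb0; intros; discriminate ]).
    + fixv (Cen (-b) (a+b)) Eq.
    + destruct (md3 (a - b)) as [t [Ht|[Ht|Ht]]].
      * fixv (Cen t (t+b)) Eq.
      * assert (a = b + 3*t + 1) by lia. subst a. fixf (Up t (t+b)) Eq.
      * assert (a = b + 3*t + 2) by lia. subst a. fixf (Dn (t+1) (t+b)) Eq.
    + destruct (par a) as [p [Ha|Ha]]; destruct (par b) as [q [Hb|Hb]]; subst a b.
      * fixv (Cen p q) Eq.
      * fixf (Sqr p q S1) Eq.
      * fixf (Sqr p q S0) Eq.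
      * fixf (Sqr (p+1) q S2) Eq.
    + destruct (md3 (b - a)) as [t [Ht|[Ht|Ht]]].
      * fixv (Cen (t+a) t) Eq.
      * assert (b = a + 3*t + 1) by lia. subst b. fixf (Up (t+a) t) Eq.
      * assert (b = a + 3*t + 2) by lia. subst b. fixf (Dn (t+a+1) t) Eq.
    + fixv (Cen (a+b) (-a)) Eq.
  - exfalso.
    pose proof (FMG h Hh _ (KFace_bd (Sqr p q k))) as H1.
    simpl in H1. rewrite <- E, (proj1 (Hhg _)) in H1. apply KF_cen in H1.
    destruct H1 as [j H1]. discriminate H1.
Qed.
End GT.

Section Main.
Variable G : (KV -> KV) -> Prop.
Hypothesis HS : subgroup_autK G.
Hypothesis HF : acts_freely G.
Hypothesis HT : quotient_is_torus G.

Lemma eqv_eq x y : x = y -> eqv G x y.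
Proof.
  intros ->. destruct HS as [_ [[e [He He']] _]]. exists e; auto.
Qed.

Lemma tr_tr a b c d x : tr a b (tr c d x) = tr c d (tr a b x).
Proof. destruct x; simpl; feq. Qed.

Lemma resp_tr a b : respects G (tr a b).
Proof.
  intros u v [g [Hg <-]]. destruct (G_tr G HS HF HT g Hg) as [c [d Hc]].
  exists g; split; auto. rewrite !Hc. apply tr_tr.
Qed.

Definition refl a b x := tr a b (sig x).

Lemma resp_refl a b : respects G (refl a b).
Proof.
  intros u v [g [Hg <-]]. destruct (G_tr G HS HF HT g Hg) as [c [d Hc]].
  destruct HS as [_ [_ [_ Hinv]]].
  destruct (Hinv g Hg) as [h [Hh Hhg]].
  destruct (G_tr G HS HF HT h Hh) as [e [f He]].
  pose proof (proj1 (Hhg (Cen 0 0))) as H0. rewrite Hc, He in H0. simpl in H0.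
  injection H0 as H1 H2.
  exists h; split; auto. rewrite He, Hc. unfold refl. destruct u; simpl; feq.
Qed.

Lemma Forall2_eqv l : Forall2 (eqv G) l l.
Proof. induction l; constructor; auto. apply eqv_eq; auto. Qed.

Lemma autX phi psi : respects G phi -> respects G psi -> FM phi -> FM psi ->
  (forall u, psi (phi u) = u /\ phi (psi u) = u) -> is_autX G phi.
Proof.
  intros R1 R2 F1 F2 Inv. split; auto. exists psi. split; auto. split; [|split].
  - intros u; destruct (Inv u) as [I1 I2]; split; apply eqv_eq; auto.
  - intros l Hl. exists (map phi l). split; auto. left; apply Forall2_eqv.
  - intros l Hl. exists (map psi l). split; auto. left; apply Forall2_eqv.
Qed.

Lemma autX_tr a b : is_autX G (tr a b).
Proof.
  apply (autX _ (tr (-a) (-b))); auto using resp_tr, FM_tr.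
  intros [m n|m n k]; simpl; split; feq.
Qed.

Lemma autX_refl a b : is_autX G (refl a b).
Proof.
  apply (autX _ (refl a b)); auto using resp_refl;
  try (unfold refl; apply FM_comp; [apply FM_tr|apply FM_sig]).
  intros [m n|m n k]; unfold refl; simpl; [split; feq | destruct k; simpl; split; feq].
Qed.
End Main.

Theorem theorem1 (G : (KV -> KV) -> Prop) :
  subgroup_autK G -> acts_freely G -> quotient_is_torus G ->
  polyhedral_quotient G ->
  exists reps : list KV, (length reps <= 4)%nat /\
    forall u : KV, exists r phi, In r reps /\ is_autX G phi /\ eqv G (phi r) u.
Proof.
  intros HS HF HT _.
  exists [Cen 0 0; Bdy 0 0 S0; Bdy 0 0 S1; Bdy 0 0 S2]. split; [simpl; lia|].
  intros [m n|m n k].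
  - exists (Cen 0 0), (tr m n). split; [simpl; auto|]. split; [apply autX_tr; auto|].
    apply eqv_eq; auto.
  - destruct k.
    + exists (Bdy 0 0 S0), (tr m n). split; [simpl; auto|]. split; [apply autX_tr; auto|]. apply eqv_eq; auto.
    + exists (Bdy 0 0 S1), (tr m n). split; [simpl; auto|]. split; [apply autX_tr; auto|]. apply eqv_eq; auto.
    + exists (Bdy 0 0 S2), (tr m n). split; [simpl; auto|]. split; [apply autX_tr; auto|]. apply eqv_eq; auto.
    + exists (Bdy 0 0 S0), (refl m n). split; [simpl; auto|]. split; [apply autX_refl; auto|]. apply eqv_eq; auto.
    + exists (Bdy 0 0 S1), (refl m n). split; [simpl; auto|]. split; [apply autX_refl; auto|]. apply eqv_eq; auto.
    + exists (Bdy 0 0 S2), (refl m n). split; [simpl; auto|]. split; [apply autX_refl; auto|]. apply eqv_eq; auto.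
Qed.
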